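(* Let $n\ge 1$ be an integer, suppose that $A\subseteq\mathbb{Z}_5^n$ is sum-free, and that $H<\mathbb{Z}_5^n$ is a maximal proper subgroup. If there is an $H$-coset $g+H$ with $|A\cap(g+H)|>\frac12|H|$, then $A$ has non-empty intersection with at most three $H$-cosets.
   Context: $\mathbb{Z}_5^n$ denotes the elementary abelian $5$-group of rank $n$. A subset $S$ of an abelian group is sum-free if there are no $x,y,z\in S$ (not necessarily distinct) with $x+y=z$. *)

(* Defs.v *)
From mathcomp Require Import all_boot all_order all_algebra.
Set Implicit Arguments. Unset Strict Implicit. Unset Printing Implicit Defensive.
Import GRing.Theory.
Local Open Scope ring_scope.

Definition Z5n (n : nat) := 'rV['Z_5]_n.

Definition is_subgroup n (H : {set Z5n n}) : bool :=
  (0 \in H) && [forall x in H, forall y in H, x - y \in H].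

Definition maximal_proper_subgroup n (H : {set Z5n n}) : Prop :=
  [/\ is_subgroup H, H != setT &
      forall K : {set Z5n n}, is_subgroup K -> H \subset K -> K = H \/ K = setT].

Definition sum_free n (A : {set Z5n n}) : Prop :=
  forall x y z, x \in A -> y \in A -> z \in A -> x + y != z.

Definition coset_add n (g : Z5n n) (H : {set Z5n n}) : {set Z5n n} :=
  [set g + h | h in H].

Definition cosets_of n (H : {set Z5n n}) : {set {set Z5n n}} :=
  [set coset_add g H | g : Z5n n].

(* Main.v *)
Require Import Defs.
From mathcomp Require Import all_boot all_order all_algebra.
Local Open Scope ring_scope.
Import GRing.Theory.

Section Aux.
Variable n : nat.
Implicit Types (H X Y : {set Z5n n}) (c d x y g : Z5n n).

Lemma sg0 H : is_subgroup H -> 0 \in H.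
Proof. by case/andP. Qed.

Lemma sgB H x y : is_subgroup H -> x \in H -> y \in H -> x - y \in H.
Proof.
case/andP=> _ /forall_inP Hf xH yH.
by have /forall_inP := Hf x xH; apply.
Qed.

Lemma sgN H y : is_subgroup H -> y \in H -> - y \in H.
Proof. by move=> sg yH; rewrite -sub0r sgB // sg0. Qed.

Lemma sgD H x y : is_subgroup H -> x \in H -> y \in H -> x + y \in H.
Proof. by move=> sg xH yH; rewrite -[y]opprK sgB // sgN. Qed.

Lemma mem_coset H c x : (x \in coset_add c H) = (x - c \in H).
Proof.
apply/imsetP/idP => [[h hH ->]|xc].
  by rewrite addrC addKr.
by exists (x - c) => //; rewrite addrC subrK.
Qed.

Lemma coset_eq H c d : is_subgroup H -> c - d \in H ->
  coset_add c H = coset_add d H.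
Proof.
move=> sg cd; apply/setP => x; rewrite !mem_coset.
apply/idP/idP => h.
  have -> : x - d = (x - c) + (c - d) by rewrite addrA subrK.
  exact: sgD.
have -> : x - c = (x - d) - (c - d) by rewrite opprB addrA subrK.
exact: sgB.
Qed.

Lemma card_coset H c : #|coset_add c H| = #|H|.
Proof. by rewrite /coset_add card_imset //; apply: addrI. Qed.


Lemma pigeon H c X Y : X \subset coset_add c H -> Y \subset coset_add c H ->
  (#|H| < #|X| + #|Y|)%N -> exists y, (y \in X) && (y \in Y).
Proof.
move=> sX sY hc.
case: (set_0Vmem (X :&: Y)) => [e|[y /setIP [yX yY]]]; last by exists y; rewrite yX yY.
have sU : X :|: Y \subset coset_add c H by rewrite subUset sX sY.
have := subset_leq_card sU.
rewrite card_coset cardsU e cards0 subn0 => h.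
by move: (leq_ltn_trans h hc); rewrite ltnn.
Qed.

Lemma mul5 x : x *+ 5 = 0 :> Z5n n.
Proof.
apply/rowP => i; rewrite mulmxnE mxE -mulr_natr.
have -> : (5%:R : 'Z_5) = 0 by apply/val_inj.
by rewrite mulr0.
Qed.

End Aux.

Theorem proposition2 (n : nat) (A H : {set Z5n n}) :
  (1 <= n)%N -> sum_free A -> maximal_proper_subgroup H ->
  (exists g : Z5n n, (#|H| < 2 * #|A :&: coset_add g H|)%N) ->
  (#|[set C in cosets_of H | C :&: A != set0]| <= 3)%N.
Proof.
move=> _ sfA [sgH HneT Hmax] [g Hg].
set B := A :&: coset_add g H.
have hBB : (#|H| < #|B| + #|B|)%N by rewrite addnn -mul2n.
have BA : forall b, b \in B -> b \in A by move=> b /setIP [].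
have Bg : forall b, b \in B -> b - g \in H by move=> b /setIP [_]; rewrite mem_coset.
have sB : B \subset coset_add g H by apply/subsetP => b /Bg; rewrite mem_coset.
have AH : forall z, z \in A -> z \in H -> False.
  move=> z zA zH.
  have s1 : [set z + b | b in B] \subset coset_add g H.
    apply/subsetP => y /imsetP [b bB ->]; rewrite mem_coset -addrA.
    exact: sgD (Bg _ bB).
  have c1 : #|[set z + b | b in B]| = #|B| by rewrite card_imset //; apply: addrI.
  have := @pigeon _ _ _ _ _ s1 sB; rewrite c1 => /(_ hBB) [y /andP [/imsetP [b bB ->] yB]].
  by move: (sfA z b _ zA (BA _ bB) (BA _ yB)); rewrite eqxx.
have A2 : forall z, z \in A -> z - g *+ 2 \in H -> False.
  move=> z zA zH.
  have s1 : [set z - b | b in B] \subset coset_add g H.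
    apply/subsetP => y /imsetP [b bB ->]; rewrite mem_coset.
    have -> : z - b - g = (z - g *+ 2) - (b - g).
      by rewrite mulr2n opprB opprD !addrA addrNK addrAC.
    exact: sgB (Bg _ bB).
  have c1 : #|[set z - b | b in B]| = #|B|.
    by rewrite card_imset // => b1 b2 /addrI /oppr_inj.
  have := @pigeon _ _ _ _ _ s1 sB; rewrite c1 => /(_ hBB) [y /andP [/imsetP [b bB ->] yB]].
  by move: (sfA b (z - b) z (BA _ bB) (BA _ yB) zA); rewrite addrC subrK eqxx.
have gH : g \notin H.
  apply/negP => gH.
  have : (0 < #|B|)%N by move: Hg; case: #|B| => //; rewrite muln0.
  rewrite card_gt0 => /set0Pn [b bB].
  apply: (AH b (BA _ bB)).
  by rewrite -(subrK g b) sgD // Bg.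
set K := [set x | [exists k : 'I_5, x - g *+ k \in H]].
have KT : K = setT.
  have sgK : is_subgroup K.
    apply/andP; split.
      by rewrite inE; apply/existsP; exists ord0; rewrite subr0 sg0.
    apply/forall_inP => x; rewrite inE => /existsP [k xk].
    apply/forall_inP => y; rewrite inE => /existsP [k' yk].
    rewrite inE; apply/existsP.
    exists (Ordinal (ltn_pmod (k + 4 * k') (isT : (0 < 5)%N))) => /=.
    have -> : g *+ ((k + 4 * k') %% 5) = g *+ k - g *+ k'.
      have mod5 : forall m, g *+ (m %% 5) = g *+ m.
        by move=> m; rewrite [in RHS](divn_eq m 5) mulrnDr mulrnA mul5 add0r.
      rewrite mod5 mulrnDr.
      congr (_ + _); apply/eqP; rewrite -subr_eq0 opprK -mulrnDr.
      by rewrite -{2}(mul1n k') -mulnDl mulnC mulrnA mul5.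
    have -> : x - y - (g *+ k - g *+ k') = (x - g *+ k) - (y - g *+ k').
      by rewrite !opprB !addrA addrAC -!addrA; congr (_ + _); rewrite addrC addrA.
    exact: sgB.
  have HK : H \subset K.
    by apply/subsetP => x xH; rewrite inE; apply/existsP; exists ord0; rewrite subr0.
  case: (Hmax K sgK HK) => // KH.
  have : g \in K by rewrite inE; apply/existsP; exists (inord 1); rewrite inordK // subrr sg0.
  by rewrite KH (negbTE gH).
have sub : [set C in cosets_of H | C :&: A != set0] \subset
  coset_add g H |: (coset_add (g *+ 3) H |: [set coset_add (g *+ 4) H]).
  apply/subsetP => C; rewrite inE => /andP [/imsetP [c _ ->] /set0Pn [x /setIP [xc xA]]].
  have : x \in K by rewrite KT inE.
  rewrite inE => /existsP [k xk].
  have -> : coset_add c H = coset_add (g *+ k) H.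
    apply: coset_eq => //.
    have -> : c - g *+ k = (x - g *+ k) - (x - c) by rewrite opprB [RHS]addrC addrA subrK.
    by apply: sgB => //; rewrite -mem_coset.
  rewrite !inE.
  case: k xk => [[|[|[|[|[|k]]]]]] //= _ xk.
  - by case: (AH x xA); rewrite -[x]subr0.
  - by rewrite eqxx.
  - by case: (A2 x xA).
  - by rewrite eqxx orbT.
  - by rewrite eqxx !orbT.
apply: (leq_trans (subset_leq_card sub)).
rewrite !cardsU1 cards1.
by rewrite -[3%N]/(1 + (1 + 1))%N !leq_add ?leq_b1.
Qed.
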